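(* Let $K$ be a field and $X$ a finite connected poset. For every Lie automorphism $\varphi$ of $I(X,K)$, the map $\widetilde\varphi$ is also a Lie automorphism of $I(X,K)$.
   Context: $I(X,K)$ is the incidence algebra: functions $f:X\times X\to K$ with $f(x,y)=0$ unless $x\le y$, product $(fg)(x,y)=\sum_{x\le t\le y}f(x,t)g(t,y)$; $e_{xy}$ ($x\le y$) is the basis element equal to $1$ at $(x,y)$ and $0$ elsewhere. A Lie automorphism is a bijective linear map preserving $[f,g]=fg-gf$. Let $l(\lfloor x,y\rfloor)$ be the maximum length of a chain in $\{z:x\le z\le y\}$, $L_i=\mathrm{span}_K\{e_{xy}: l(\lfloor x,y\rfloor)=i\}$ ($i\ge0$), so $I(X,K)=\bigoplus_i L_i$. $\widetilde\varphi$ is the linear map sending $e_{xy}\in L_i$ to the $L_i$-component of $\varphi(e_{xy})$ (one has $\varphi(e_{xy})-\widetilde\varphi(e_{xy})\in\bigoplus_{k>i}L_k$). Connected means any two elements are joined by a sequence in which consecutive elements are in a covering relation. *)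

(* Defs.v *)
From HB Require Import structures.
From mathcomp Require Import all_boot all_order all_algebra.
Set Implicit Arguments. Unset Strict Implicit. Unset Printing Implicit Defensive.
Import Order.TTheory GRing.Theory.
Local Open Scope ring_scope.

(* Incidence algebra I(X,K) of a finite poset X over a field K, represented
   inside the K-vector space {ffun X * X -> K} of all functions X x X -> K,
   as the subspace of those f with f(x,y) = 0 unless x <= y. *)
Section Incidence.
Variables (K : fieldType) (d : Order.disp_t) (X : finPOrderType d).

Local Notation fnT := {ffun X * X -> K}.

Definition sc (a : K) (f : fnT) : fnT := [ffun q : X * X => a * f q].

Definition incid (f : fnT) : bool :=
  [forall x : X, forall y : X, ~~ (x <= y)%O ==> (f (x, y) == 0)].

Definition imul (f g : fnT) : fnT :=
  [ffun p : X * X => \sum_(t : X | (p.1 <= t)%O && (t <= p.2)%O) f (p.1, t) * g (t, p.2)].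

Definition ilie (f g : fnT) : fnT := imul f g - imul g f.

Definition ebas (x y : X) : fnT := [ffun p : X * X => (p == (x, y))%:R].

(* chain with n+1 elements (i.e. of length n) inside {z : x <= z <= y} *)
Definition chain_in (x y : X) (n : nat) : bool :=
  [exists s : n.+1.-tuple X,
     sorted (fun a b : X => (a < b)%O) s && all (fun z => (x <= z)%O && (z <= y)%O) s].

(* l(floor x,y ceil): maximum length of a chain in [x,y]; a chain has at most
   #|X| elements, so its length is < #|X|. *)
Definition ilen (x y : X) : nat := \max_(n < #|X| | chain_in x y n) n.

Definition Lcomp (i : nat) (f : fnT) : fnT :=
  [ffun p : X * X => if ilen p.1 p.2 == i then f p else 0].

Definition tilde (phi : fnT -> fnT) (f : fnT) : fnT :=
  \sum_(p : X * X | (p.1 <= p.2)%O) sc (f p) (Lcomp (ilen p.1 p.2) (phi (ebas p.1 p.2))).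

Definition lie_automorphism (phi : fnT -> fnT) : Prop :=
  [/\ (forall f, incid f -> incid (phi f)),
      (forall (a : K) f g, incid f -> incid g -> phi (sc a f + g) = sc a (phi f) + phi g),
      (forall f g, incid f -> incid g -> phi f = phi g -> f = g),
      (forall g, incid g -> exists2 f, incid f & phi f = g)
    & (forall f g, incid f -> incid g -> phi (ilie f g) = ilie (phi f) (phi g))].

Definition covers (x y : X) : bool :=
  (x < y)%O && [forall z : X, ~~ ((x < z)%O && (z < y)%O)].

Definition poset_connected : Prop :=
  forall x y : X, exists s : seq X,
    path (fun a b => covers a b || covers b a) x s /\ last x s = y.

End Incidence.

(* Main.v *)
From HB Require Import structures.
Require Import Defs.
From mathcomp Require Import all_boot all_order all_algebra.
From mathcomp Require Import zify.
From mathcomp Require Import ring.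
Set Implicit Arguments. Unset Strict Implicit. Unset Printing Implicit Defensive.
Import Order.TTheory GRing.Theory.
Local Open Scope ring_scope.

Section Dev.
Variables (K : fieldType) (d : Order.disp_t) (X : finPOrderType d).
Local Notation fnT := {ffun X * X -> K}.
Local Notation eb := (ebas K).

Definition fm (f g : fnT) : fnT :=
  [ffun p : X * X => \sum_(t : X) f (p.1, t) * g (t, p.2)].
Definition delta : fnT := [ffun p : X * X => (p.1 == p.2)%:R].

Lemma fmA : associative fm.
Proof.
move=> f g h; apply/ffunP=> [[a b]]; rewrite !ffunE /=.
transitivity (\sum_t \sum_s f (a, t) * g (t, s) * h (s, b)).
  apply: eq_bigr => t _; rewrite ffunE /= big_distrr /=.
  by apply: eq_bigr => s _; rewrite mulrA.
rewrite exchange_big /=; apply: eq_bigr => s _; rewrite ffunE /= big_distrl /=.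
by [].
Qed.

Lemma fm1l : left_id delta fm.
Proof.
move=> f; apply/ffunP=> [[a b]]; rewrite ffunE /=.
rewrite (bigD1 a) //= big1 ?addr0; first by rewrite ffunE /= eqxx mul1r.
by move=> t /negPf ta; rewrite ffunE /= eq_sym ta mul0r.
Qed.

Lemma fm1r : right_id delta fm.
Proof.
move=> f; apply/ffunP=> [[a b]]; rewrite ffunE /=.
rewrite (bigD1 b) //= big1 ?addr0; first by rewrite ffunE /= eqxx mulr1.
by move=> t /negPf ta; rewrite ffunE /= ta mulr0.
Qed.

Lemma fmDl : left_distributive fm +%R.
Proof.
move=> f g h; apply/ffunP=> p; rewrite !ffunE -big_split /=.
by apply: eq_bigr => t _; rewrite ffunE mulrDl.
Qed.

Lemma fmDr : right_distributive fm +%R.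
Proof.
move=> f g h; apply/ffunP=> p; rewrite !ffunE -big_split /=.
by apply: eq_bigr => t _; rewrite ffunE mulrDr.
Qed.

Definition IA := fnT.
HB.instance Definition _ := GRing.Zmodule.on IA.
HB.instance Definition _ := GRing.Zmodule_isPzRing.Build IA fmA fm1l fm1r fmDl fmDr.

Lemma mulIA (f g : IA) : f * g = fm f g.
Proof. by []. Qed.


Lemma subE (f g : fnT) p : (f - g) p = f p - g p.
Proof. by rewrite !ffunE. Qed.
Lemma addE (f g : fnT) p : (f + g) p = f p + g p.
Proof. by rewrite !ffunE. Qed.
Lemma zeroE p : (0 : fnT) p = 0.
Proof. by rewrite !ffunE. Qed.

Lemma scE a (f : fnT) (p : X * X) : sc a f p = a * f p.
Proof. by rewrite ffunE. Qed.

Lemma scDr a (f g : fnT) : sc a (f + g) = sc a f + sc a g.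
Proof. by apply/ffunP=> p; rewrite !ffunE mulrDr. Qed.
Lemma scDl a b (f : fnT) : sc (a + b) f = sc a f + sc b f.
Proof. by apply/ffunP=> p; rewrite !ffunE mulrDl. Qed.
Lemma sc0 (f : fnT) : sc 0 f = 0.
Proof. by apply/ffunP=> p; rewrite !ffunE mul0r. Qed.
Lemma sc_0 a : sc a (0 : fnT) = 0.
Proof. by apply/ffunP=> p; rewrite !ffunE mulr0. Qed.
Lemma sc1 (f : fnT) : sc 1 f = f.
Proof. by apply/ffunP=> p; rewrite !ffunE mul1r. Qed.
Lemma scN1 (f : fnT) : sc (-1) f = - f.
Proof. by apply/ffunP=> p; rewrite !ffunE mulN1r. Qed.
Lemma scA a b (f : fnT) : sc a (sc b f) = sc (a * b) f.
Proof. by apply/ffunP=> p; rewrite !ffunE mulrA. Qed.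
Lemma scN a (f : fnT) : sc a (- f) = - sc a f.
Proof. by apply/ffunP=> p; rewrite !ffunE mulrN. Qed.
Lemma scB a (f g : fnT) : sc a (f - g) = sc a f - sc a g.
Proof. by rewrite scDr scN. Qed.
Lemma sc_sum a (I : Type) (r : seq I) (P : pred I) (F : I -> fnT) :
  sc a (\sum_(i <- r | P i) F i) = \sum_(i <- r | P i) sc a (F i).
Proof.
elim: r => [|i r IH]; first by rewrite !big_nil sc_0.
by rewrite !big_cons; case: ifP => // _; rewrite scDr IH.
Qed.

Lemma fm_scl a (f g : fnT) : fm (sc a f) g = sc a (fm f g).
Proof.
apply/ffunP=> p; rewrite !ffunE big_distrr /=; apply: eq_bigr => t _.
by rewrite ffunE mulrA.
Qed.
Lemma fm_scr a (f g : fnT) : fm f (sc a g) = sc a (fm f g).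
Proof.
apply/ffunP=> p; rewrite !ffunE big_distrr /=; apply: eq_bigr => t _.
by rewrite ffunE mulrCA.
Qed.

Lemma incidP (f : fnT) : reflect (forall x y : X, ~~ (x <= y)%O -> f (x, y) = 0) (incid f).
Proof.
apply: (iffP forallP) => [H x y nxy|H x].
  by move/forallP: (H x) => /(_ y); rewrite nxy => /eqP.
by apply/forallP=> y; apply/implyP=> nxy; rewrite H.
Qed.

Lemma incid_le (f : fnT) (x y : X) : incid f -> f (x, y) != 0 -> (x <= y)%O.
Proof. by move=> /incidP H; apply: contraR => /H ->; rewrite eqxx. Qed.

Lemma incid0 : incid (0 : fnT).
Proof. by apply/incidP=> x y _; rewrite ffunE. Qed.
Lemma incidD (f g : fnT) : incid f -> incid g -> incid (f + g).
Proof. by move=> /incidP Hf /incidP Hg; apply/incidP=> x y n; rewrite ffunE Hf // Hg // addr0. Qed.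
Lemma incidN (f : fnT) : incid f -> incid (- f).
Proof. by move=> /incidP Hf; apply/incidP=> x y n; rewrite ffunE Hf // oppr0. Qed.
Lemma incidB (f g : fnT) : incid f -> incid g -> incid (f - g).
Proof. by move=> Hf Hg; apply: incidD => //; apply: incidN. Qed.
Lemma incid_sc a (f : fnT) : incid f -> incid (sc a f).
Proof. by move=> /incidP Hf; apply/incidP=> x y n; rewrite ffunE Hf // mulr0. Qed.
Lemma incid_sum (I : Type) (r : seq I) (P : pred I) (F : I -> fnT) :
  (forall i, P i -> incid (F i)) -> incid (\sum_(i <- r | P i) F i).
Proof.
move=> H; elim/big_rec: _ => [|i x Pi Hx]; first exact: incid0.
by apply: incidD => //; apply: H.
Qed.
Lemma incid_delta : incid delta.
Proof.
apply/incidP=> x y n; rewrite ffunE /=; case: eqP => // exy.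
by rewrite exy lexx in n.
Qed.
Lemma incid_ebas (x y : X) : (x <= y)%O -> incid (eb x y).
Proof.
move=> lxy; apply/incidP=> a b n; rewrite ffunE; case: eqP => // [] [ea eb]; subst a b.
by rewrite lxy in n.
Qed.
Lemma incid_fm (f g : fnT) : incid f -> incid g -> incid (fm f g).
Proof.
move=> Hf Hg; apply/incidP=> x y n; rewrite ffunE big1 // => t _ /=.
have [ft|/incid_le ft] := eqVneq (f (x, t)) 0; first by rewrite ft mul0r.
have [gt|/incid_le gt] := eqVneq (g (t, y)) 0; first by rewrite gt mulr0.
by rewrite (le_trans (ft Hf) (gt Hg)) in n.
Qed.

Lemma imul_fm (f g : fnT) : incid f -> incid g -> imul f g = fm f g.
Proof.
move=> Hf Hg; apply/ffunP=> [[x y]]; rewrite !ffunE /= [RHS](bigID (fun t => (x <= t)%O && (t <= y)%O)) /=.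
rewrite [X in _ = _ + X]big1 ?addr0 // => t /nandP [] n.
  by rewrite (incidP _ Hf) ?mul0r.
by rewrite [g _](incidP _ Hg) ?mulr0.
Qed.

Lemma ilie_fm (f g : fnT) : incid f -> incid g -> ilie f g = fm f g - fm g f.
Proof. by move=> Hf Hg; rewrite /ilie !imul_fm. Qed.

Lemma incid_ilie (f g : fnT) : incid f -> incid g -> incid (ilie f g).
Proof. by move=> Hf Hg; rewrite ilie_fm //; apply: incidB; apply: incid_fm. Qed.

Lemma fm_ebas (a b c e : X) : fm (eb a b) (eb c e) = if b == c then eb a e else 0.
Proof.
apply/ffunP=> [[x y]]; rewrite ffunE /=.
case: eqP => [<-|nbc].
  rewrite (bigD1 b) //= big1 ?addr0; last first.
    by move=> t /negPf tb; rewrite !ffunE /= !xpair_eqE tb andbF mul0r.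
  rewrite !ffunE /= !xpair_eqE !eqxx andbT /=.
  by case: (x == a); case: (y == e); rewrite /= ?mulr1 ?mulr0 ?mul0r.
rewrite ffunE big1 // => t _; rewrite !ffunE /= !xpair_eqE.
case: (t =P b) => [->|]; last by rewrite andbF mul0r.
by case: (b =P c) nbc => // _ _; rewrite andbT mulr0 // andbF.
Qed.

Definition linI (psi : fnT -> fnT) :=
  forall (a : K) f g, incid f -> incid g -> psi (sc a f + g) = sc a (psi f) + psi g.

Section Lin.
Variable psi : fnT -> fnT.
Hypothesis Hl : linI psi.

Lemma lin0 : psi 0 = 0.
Proof.
have := Hl 1 incid0 incid0; rewrite !sc1 addr0 => H.
by have := congr1 (fun x => x - psi 0) H; rewrite addrK subrr => <-.
Qed.
Lemma linD f g : incid f -> incid g -> psi (f + g) = psi f + psi g.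
Proof. by move=> Hf Hg; have := Hl 1 Hf Hg; rewrite !sc1. Qed.
Lemma linZ a f : incid f -> psi (sc a f) = sc a (psi f).
Proof. by move=> Hf; have := Hl a Hf incid0; rewrite !addr0 lin0 addr0. Qed.
Lemma linN f : incid f -> psi (- f) = - psi f.
Proof. by move=> Hf; rewrite -scN1 linZ // scN1. Qed.
Lemma linB f g : incid f -> incid g -> psi (f - g) = psi f - psi g.
Proof. by move=> Hf Hg; rewrite linD ?linN //; apply: incidN. Qed.
Lemma lin_sum (I : Type) (r : seq I) (P : pred I) (F : I -> fnT) :
  (forall i, P i -> incid (F i)) ->
  psi (\sum_(i <- r | P i) F i) = \sum_(i <- r | P i) psi (F i).
Proof.
move=> H; elim: r => [|i r IH]; first by rewrite !big_nil lin0.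
rewrite !big_cons; case: ifP => // Pi.
by rewrite linD ?IH //; [apply: H | apply: incid_sum].
Qed.
End Lin.

Local Notation ltX := (fun a b : X => (a < b)%O).
Definition inI (x y : X) := (fun z : X => (x <= z)%O && (z <= y)%O).

Lemma chain_inP (x y : X) n :
  chain_in x y n <-> exists s : seq X, [/\ size s = n.+1, sorted ltX s & all (inI x y) s].
Proof.
split.
  by case/existsP=> t /andP[s1 s2]; exists (tval t); rewrite size_tuple.
case=> s [sz s1 s2]; apply/existsP.
have sz' : size s == n.+1 by rewrite sz.
by exists (Tuple sz'); rewrite /= s1 s2.
Qed.

Lemma ltX_trans : transitive ltX.
Proof. by move=> a b c; apply: lt_trans. Qed.

Lemma chain_size (x y : X) n : chain_in x y n -> (n < #|X|)%N.
Proof.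
case/chain_inP=> s [sz so _].
have us : uniq s by apply: (sorted_uniq ltX_trans) => // a; rewrite /= ltxx.
by rewrite -ltnS -sz -(card_uniqP us) ltnS max_card.
Qed.

Lemma chain0 (x y : X) : chain_in x y 0 = (x <= y)%O.
Proof.
apply/idP/idP.
  case/chain_inP=> s [sz _ al]; case: s sz al => [|a s] // _ /andP[/andP[xa ay] _].
  exact: le_trans xa ay.
by move=> lxy; apply/chain_inP; exists [:: x]; rewrite /= /inI lexx lxy.
Qed.

Lemma ilen_ge (x y : X) n : chain_in x y n -> (n <= ilen x y)%N.
Proof.
move=> c; have lt := chain_size c.
by rewrite /ilen; apply: (leq_bigmax_cond (Ordinal lt)).
Qed.

Lemma ilen_chain (x y : X) : (x <= y)%O -> chain_in x y (ilen x y).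
Proof.
move=> lxy; have c0 : chain_in x y 0 by rewrite chain0.
have lt := chain_size c0.
rewrite /ilen (bigop.bigmax_eq_arg (Ordinal lt)) //.
by case: arg_maxnP.
Qed.

Lemma ilen_nle (x y : X) : ~~ (x <= y)%O -> ilen x y = 0.
Proof.
move=> n; apply/eqP; rewrite -leqn0; apply/bigmax_leqP => i c.
have : chain_in x y 0.
  case/chain_inP: c => s [sz _ al]; case: s sz al => [|a s] // _ /andP[/andP[xa ay] _].
  by rewrite chain0 (le_trans xa ay).
by rewrite chain0 (negPf n).
Qed.

Lemma ilen_lt (x y : X) : (ilen x y < #|X|)%N.
Proof.
case: (boolP (x <= y)%O) => [lxy|n]; first exact/chain_size/ilen_chain.
by rewrite ilen_nle //; apply/card_gt0P; exists x.
Qed.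

Lemma ilen_xx (x : X) : ilen x x = 0.
Proof.
have := ilen_chain (lexx x); case/chain_inP => s [sz so al].
case: s sz so al => [|a [|b s]] //=; first by case.
move=> _ /andP[ab _] /and3P[/andP[xa ax] /andP[xb bx] _].
have ea : a = x by apply/le_anti; rewrite ax xa.
have eb : b = x by apply/le_anti; rewrite bx xb.
by move: ab; rewrite ea eb ltxx.
Qed.

Lemma ilen_gt0 (x y : X) : (0 < ilen x y)%N = (x < y)%O.
Proof.
apply/idP/idP => [pos|lxy].
  have lxy : (x <= y)%O by apply: contraLR pos => /ilen_nle ->.
  have := ilen_chain lxy; case/chain_inP => s [sz so al].
  case: s sz so al => [|a [|b s]] //=; first by case=> e; rewrite -e in pos.
  move=> _ /andP[ab _] /and3P[/andP[xa _] /andP[_ bw] _].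
  exact: le_lt_trans xa (lt_le_trans ab bw).
apply: (@ilen_ge x y 1); apply/chain_inP; exists [:: x; y].
by split; rewrite //= /inI ?lxy ?lexx ?(ltW lxy).
Qed.

Lemma ilen_add (x t w : X) : (x <= t)%O -> (t <= w)%O ->
  (ilen x t + ilen t w <= ilen x w)%N.
Proof.
move=> xt tw; have := ilen_chain xt; have := ilen_chain tw.
case/chain_inP => s2 [sz2 so2 al2]; case/chain_inP => s1 [sz1 so1 al1].
apply: ilen_ge; apply/chain_inP; exists (s1 ++ behead s2); split.
- by rewrite size_cat size_behead sz1 sz2.
- case: s1 sz1 so1 al1 => [|h1 t1] // _ /= so1 al1.
  rewrite cat_path so1 /=.
  case: s2 sz2 so2 al2 => [|h2 [|c t3]] //= _ /andP[h2c pc] /andP[/andP[th2 _] _].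
  rewrite pc andbT; apply: le_lt_trans h2c; apply: le_trans th2.
  have : last h1 t1 \in h1 :: t1 by apply: mem_last.
  by move/(allP (al1 : all (inI x t) (h1 :: t1))) => /andP[].
- rewrite all_cat; apply/andP; split.
    by apply/allP => z /(allP al1) /andP[xz zt]; rewrite /inI xz (le_trans zt tw).
  apply/allP => z /mem_behead /(allP al2) /andP[tz zw].
  by rewrite /inI zw (le_trans xt tz).
Qed.

Lemma ilen_split (x w : X) k : (k < ilen x w)%N ->
  exists y : X, [/\ (x <= y)%O, (y < w)%O & (k <= ilen x y)%N].
Proof.
move=> kl.
have xw : (x <= w)%O by apply: contraLR kl => /ilen_nle ->.
have := ilen_chain xw; case/chain_inP => s [sz so al].
have lesorted : sorted (fun a b : X => (a <= b)%O) s.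
  by apply: sub_sorted so => a b; apply: ltW.
have ks : (k < size s)%N by rewrite sz ltnS ltnW.
have k1s : (k.+1 < size s)%N by rewrite sz ltnS.
exists (nth x s k); split.
- by have /(allP al) /andP[] := mem_nth x ks.
- apply: (@lt_le_trans _ _ (nth x s k.+1)).
    by apply: (sorted_ltn_nth ltX_trans x so).
  by have /(allP al) /andP[] := mem_nth x k1s.
- apply: ilen_ge; apply/chain_inP; exists (take k.+1 s); split.
  + by rewrite size_take k1s.
  + exact: take_sorted.
  apply/allP => z zin; have := mem_take zin => /(allP al) /andP[xz _].
  rewrite /inI xz /=.
  have [i ilt <-] := nthP x zin.
  rewrite size_take k1s in ilt.
  rewrite nth_take //.
  by apply: (sorted_leq_nth le_trans lexx x lesorted) => //=; rewrite inE // (ltn_trans ilt).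
Qed.

Definition Fk (k : nat) (f : fnT) : Prop :=
  incid f /\ forall x y : X, (ilen x y < k)%N -> f (x, y) = 0.

Lemma Fk0 f : Fk 0 f <-> incid f.
Proof. by split=> [[]|H]. Qed.
Lemma Fk_incid k f : Fk k f -> incid f.
Proof. by case. Qed.
Lemma Fk_mono j k f : (j <= k)%N -> Fk k f -> Fk j f.
Proof. by move=> jk [H1 H2]; split=> // x y lt; apply: H2; apply: leq_trans jk. Qed.
Lemma Fk_0 k : Fk k 0.
Proof. by split; [exact: incid0 | move=> x y _; rewrite ffunE]. Qed.
Lemma FkD k f g : Fk k f -> Fk k g -> Fk k (f + g).
Proof.
move=> [i1 h1] [i2 h2]; split; first exact: incidD.
by move=> x y lt; rewrite ffunE h1 // h2 // addr0.
Qed.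
Lemma FkN k f : Fk k f -> Fk k (- f).
Proof. by move=> [i1 h1]; split; [exact: incidN | move=> x y lt; rewrite ffunE h1 // oppr0]. Qed.
Lemma FkB k f g : Fk k f -> Fk k g -> Fk k (f - g).
Proof. by move=> H1 H2; apply: FkD => //; apply: FkN. Qed.
Lemma Fk_sc k a f : Fk k f -> Fk k (sc a f).
Proof. by move=> [i1 h1]; split; [exact: incid_sc | move=> x y lt; rewrite ffunE h1 // mulr0]. Qed.
Lemma Fk_sum k (I : Type) (r : seq I) (P : pred I) (F : I -> fnT) :
  (forall i, P i -> Fk k (F i)) -> Fk k (\sum_(i <- r | P i) F i).
Proof.
move=> H; elim: r => [|i r IH]; first by rewrite big_nil; apply: Fk_0.
by rewrite big_cons; case: ifP => // Pi; apply: FkD => //; apply: H.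
Qed.

Lemma Fk_fm a b f g : Fk a f -> Fk b g -> Fk (a + b)%N (fm f g).
Proof.
move=> [i1 h1] [i2 h2]; split; first exact: incid_fm.
move=> x w lt; rewrite ffunE big1 // => t _ /=.
have [ft|ft] := eqVneq (f (x, t)) 0; first by rewrite ft mul0r.
have [gt|gt] := eqVneq (g (t, w)) 0; first by rewrite gt mulr0.
have xt := incid_le i1 ft; have tw := incid_le i2 gt.
have a1 : (a <= ilen x t)%N by rewrite leqNgt; apply: contra ft => /h1 ->.
have b1 : (b <= ilen t w)%N by rewrite leqNgt; apply: contra gt => /h2 ->.
have := ilen_add xt tw => le.
by have := leq_trans (leq_add a1 b1) le; rewrite leqNgt lt.
Qed.

Lemma Fk_ilie a b f g : Fk a f -> Fk b g -> Fk (a + b)%N (ilie f g).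
Proof.
move=> H1 H2; rewrite ilie_fm; try exact: Fk_incid H1; try exact: Fk_incid H2.
by apply: FkB; [apply: Fk_fm | rewrite addnC; apply: Fk_fm].
Qed.

Lemma Fk1_diag f : incid f -> (forall x, f (x, x) = 0) -> Fk 1 f.
Proof.
move=> If Hd; split=> // x y; rewrite ltnS leqn0 => /eqP l0.
case: (eqVneq x y) => [<-|nxy]; first exact: Hd.
apply: (incidP _ If); apply/negP => xy.
have : (x < y)%O by rewrite lt_neqAle nxy xy.
by rewrite -ilen_gt0 l0.
Qed.

Lemma Fk_diag0 k f x : (0 < k)%N -> Fk k f -> f (x, x) = 0.
Proof. by move=> k0 [_ H]; apply: H; rewrite ilen_xx. Qed.

Lemma Fk1_ilie f g : incid f -> incid g -> Fk 1 (ilie f g).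
Proof.
move=> Hf Hg; apply: Fk1_diag; first exact: incid_ilie.
move=> x; rewrite /ilie !ffunE /=.
have E (u v : fnT) : \sum_(t | (x <= t)%O && (t <= x)%O) u (x, t) * v (t, x) = u (x, x) * v (x, x).
  rewrite (big_pred1 x) // => t /=; apply/andP/eqP => [[]|->]; last by rewrite lexx.
  by move=> a b; apply/le_anti; rewrite a b.
by rewrite !E mulrC subrr.
Qed.

Lemma Fk_ebas (x y : X) : (x <= y)%O -> Fk (ilen x y) (eb x y).
Proof.
move=> xy; split; first exact: incid_ebas.
move=> a b lt; rewrite ffunE; case: eqP => // [[ea eb']]; subst a b.
by rewrite ltnn in lt.
Qed.

Lemma Fk_big f : Fk #|X| f -> f = 0.
Proof. by move=> [_ H]; apply/ffunP=> [[x y]]; rewrite ffunE H // ilen_lt. Qed.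

Lemma decomp (f : fnT) : f = \sum_(p : X * X) sc (f p) (eb p.1 p.2).
Proof.
apply/ffunP=> q; rewrite sum_ffunE (bigD1 q) //= big1 ?addr0.
  by rewrite !ffunE -surjective_pairing eqxx mulr1.
move=> p pq; rewrite !ffunE -surjective_pairing.
by rewrite eq_sym (negPf pq) mulr0.
Qed.

Lemma decompF k (f : fnT) : Fk k f ->
  f = \sum_(p : X * X | (p.1 <= p.2)%O && (k <= ilen p.1 p.2)%N) sc (f p) (eb p.1 p.2).
Proof.
move=> [If Hf]; rewrite {1}[f]decomp (bigID (fun p : X * X => (p.1 <= p.2)%O && (k <= ilen p.1 p.2)%N)) /=.
rewrite [X in _ + X]big1 ?addr0 // => -[x y] /nandP /= [n|].
  by rewrite (incidP _ If) // sc0.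
by rewrite -ltnNge => /Hf ->; rewrite sc0.
Qed.

Lemma decompI (f : fnT) : incid f ->
  f = \sum_(p : X * X | (p.1 <= p.2)%O) sc (f p) (eb p.1 p.2).
Proof.
move=> If; rewrite {1}(@decompF 0 f) //; apply: eq_bigl => p.
by rewrite andbT.
Qed.

Lemma ilie_ebas (a b c e : X) : (a <= b)%O -> (c <= e)%O ->
  ilie (eb a b) (eb c e) = (if b == c then eb a e else 0) - (if e == a then eb c b else 0).
Proof. by move=> ab ce; rewrite ilie_fm ?incid_ebas // !fm_ebas. Qed.

Section FPres.
Variable psi : fnT -> fnT.
Hypotheses (Hi : forall f, incid f -> incid (psi f)) (Hl : linI psi)
  (Hb : forall f g, incid f -> incid g -> psi (ilie f g) = ilie (psi f) (psi g)).

Lemma Fpres1 (x w : X) : (x < w)%O -> Fk 1 (psi (eb x w)).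
Proof.
move=> xw; have xw' := ltW xw.
have -> : eb x w = ilie (eb x x) (eb x w).
  rewrite ilie_ebas ?lexx // eqxx; case: eqP => [ex|_]; last by rewrite subr0.
  by rewrite ex ltxx in xw.
by rewrite Hb ?incid_ebas ?lexx //; apply: Fk1_ilie; apply: Hi; apply: incid_ebas.
Qed.

Lemma Fpres k f : Fk k f -> Fk k (psi f).
Proof.
elim: k f => [|k IH] f Hf.
  by apply/Fk0; apply: Hi; apply/Fk0.
rewrite (decompF Hf) lin_sum //; last first.
  by move=> p /andP[le _]; apply: incid_sc; apply: incid_ebas.
apply: Fk_sum => -[x w] /andP /= [xw kl].
rewrite linZ //; last exact: incid_ebas.
apply: Fk_sc.
have xw' : (x < w)%O by rewrite -ilen_gt0 (leq_trans _ kl).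
clear Hf; case: k IH kl => [|k] IH kl; first exact: Fpres1.
have [y [xy yw ky]] := ilen_split kl.
have -> : eb x w = ilie (eb x y) (eb y w).
  rewrite ilie_ebas ?(ltW yw) // eqxx; case: eqP => [ex|_]; last by rewrite subr0.
  by rewrite ex ltxx in xw'.
rewrite Hb ?incid_ebas ?(ltW yw) // -addn1; apply: Fk_ilie; last exact: Fpres1.
apply: IH; apply: Fk_mono (Fk_ebas xy) => //.
Qed.
End FPres.

Section FSurj.
Variable psi : fnT -> fnT.
Hypothesis LA : lie_automorphism psi.

Let Hi : forall f, incid f -> incid (psi f). Proof. by case: LA. Qed.
Let Hl : linI psi. Proof. by case: LA. Qed.
Let Hinj : forall f g, incid f -> incid g -> psi f = psi g -> f = g. Proof. by case: LA. Qed.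
Let Hs : forall g, incid g -> exists2 f, incid f & psi f = g. Proof. by case: LA. Qed.
Let Hb : forall f g, incid f -> incid g -> psi (ilie f g) = ilie (psi f) (psi g).
Proof. by case: LA. Qed.

Definition inImg k h := exists g, Fk k g /\ psi g = h.

Lemma inImg_sum k (I : Type) (r : seq I) (P : pred I) (F : I -> fnT) (c : I -> K) :
  (forall i, P i -> inImg k (F i)) -> inImg k (\sum_(i <- r | P i) sc (c i) (F i)).
Proof.
move=> H; elim: r => [|i r [g [Fg eg]]].
  by exists 0; rewrite big_nil lin0 //; split=> //; apply: Fk_0.
rewrite big_cons; case: ifP => Pi; last by exists g.
have [gi [Fgi egi]] := H i Pi.
exists (sc (c i) gi + g); split; first by apply: FkD => //; apply: Fk_sc.
by rewrite Hl ?egi ?eg //; [apply: Fk_incid Fgi | apply: Fk_incid Fg].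
Qed.

Lemma Fsurj1 (x w : X) : (x < w)%O -> inImg 1 (eb x w).
Proof.
move=> xw; have xw' := ltW xw.
have [g1 I1 e1] := Hs (incid_ebas (lexx x)).
have [g2 I2 e2] := Hs (incid_ebas xw').
exists (ilie g1 g2); split; first exact: Fk1_ilie.
rewrite Hb // e1 e2 ilie_ebas ?lexx // eqxx; case: eqP => [ex|_]; last by rewrite subr0.
by rewrite ex ltxx in xw.
Qed.

Lemma Fsurj k h : Fk k h -> inImg k h.
Proof.
elim: k h => [|k IH] h Hh.
  by have [g Ig eg] := Hs (Fk_incid Hh); exists g.
rewrite (decompF Hh); apply: inImg_sum => -[x w] /andP /= [xw kl].
have xw' : (x < w)%O by rewrite -ilen_gt0 (leq_trans _ kl).
clear Hh; case: k IH kl => [|k] IH kl; first exact: Fsurj1.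
have [y [xy yw ky]] := ilen_split kl.
have [g1 [F1 e1]] := IH _ (Fk_mono ky (Fk_ebas xy)).
have [g2 [F2 e2]] := Fsurj1 yw.
exists (ilie g1 g2); split; first by rewrite -addn1; apply: Fk_ilie.
rewrite Hb ?e1 ?e2; try exact: Fk_incid F1; try exact: Fk_incid F2.
rewrite ilie_ebas ?(ltW yw) // eqxx; case: eqP => [ex|_]; last by rewrite subr0.
by rewrite ex ltxx in xw'.
Qed.

Lemma Frev k g : incid g -> Fk k (psi g) -> Fk k g.
Proof.
move=> Ig /Fsurj [g' [F' e']].
by rewrite -(Hinj (Fk_incid F') Ig e').
Qed.

End FSurj.

Definition lam (q : X * X) (f : fnT) : K := f (q.1, q.1) - f (q.2, q.2).

Lemma lamD q f g : lam q (f + g) = lam q f + lam q g.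
Proof. by rewrite /lam !ffunE opprD addrACA. Qed.

Lemma lam_sum q (I : Type) (r : seq I) (P : pred I) (F : I -> fnT) (c : I -> K) :
  lam q (\sum_(i <- r | P i) sc (c i) (F i)) = \sum_(i <- r | P i) c i * lam q (F i).
Proof.
rewrite /lam !sum_ffunE -sumrB; apply: eq_bigr => i _.
by rewrite !ffunE mulrBr.
Qed.

Lemma lam_F1 q f : Fk 1 f -> lam q f = 0.
Proof. by move=> F1; rewrite /lam !(Fk_diag0 _ _ F1) // subrr. Qed.

Lemma lam_ebas (q : X * X) (a : X) : lam q (eb a a) = (q.1 == a)%:R - (q.2 == a)%:R.
Proof. by rewrite /lam !ffunE !xpair_eqE !andbb. Qed.

Lemma lamDecomp (psi : fnT -> fnT) q g : linI psi ->
  (forall f, Fk 1 f -> Fk 1 (psi f)) -> incid g ->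
  lam q (psi g) = \sum_(z : X) g (z, z) * lam q (psi (eb z z)).
Proof.
move=> Hl HF Ig.
set D := \sum_(z : X) sc (g (z, z)) (eb z z).
have ID : incid D by apply: incid_sum => z _; apply: incid_sc; apply: incid_ebas.
have FJ : Fk 1 (g - D).
  apply: Fk1_diag; first exact: incidB.
  move=> x; rewrite !ffunE sum_ffunE (bigD1 x) //= big1 ?addr0.
    by rewrite !ffunE eqxx mulr1 subrr.
  by move=> z zx; rewrite !ffunE xpair_eqE eq_sym (negPf zx) mulr0.
have eg : g = D + (g - D) by rewrite addrC subrK.
rewrite {1}eg (linD Hl) //; last exact: (Fk_incid FJ).
rewrite lamD (lam_F1 q (HF _ FJ)) addr0.
rewrite (lin_sum Hl); last by move=> z _; apply: incid_sc; apply: incid_ebas.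
rewrite -(lam_sum q (index_enum X) predT (fun z => psi (eb z z)) (fun z => g (z, z))).
congr (lam q _); apply: eq_bigr => z _; rewrite (linZ Hl) //.
exact: incid_ebas.
Qed.

Lemma weight_unique (q q' : X * X) : (q.1 < q.2)%O -> (q'.1 < q'.2)%O ->
  (forall a, lam q (eb a a) = lam q' (eb a a)) -> q = q'.
Proof.
case: q q' => [a b] [a' b'] /= ab ab' H.
have nab : a != b by rewrite lt_eqF.
have nab' : a' != b' by rewrite lt_eqF.
have Ha := H a; have Hb := H b; rewrite !lam_ebas /= in Ha Hb.
rewrite eqxx eq_sym (negPf nab) subr0 in Ha.
rewrite eqxx (negPf nab) sub0r in Hb.
have n1 : (1 : K) != 0 := oner_neq0 K.
have [ea|na] := eqVneq a' a.
  rewrite ea (negPf nab) sub0r in Hb.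
  have [eb'|nb] := eqVneq b' b; first by rewrite ea eb'.
  by move: Hb; rewrite (negPf nb) oppr0 => /eqP; rewrite oppr_eq0 (negPf n1).
rewrite (negPf na) sub0r in Ha.
have [eb'|nb] := eqVneq b' a; last first.
  by move: Ha; rewrite (negPf nb) oppr0 => /eqP; rewrite (negPf n1).
have [ea'|na'] := eqVneq a' b.
  by move: ab'; rewrite ea' eb' => ba; move: (lt_trans ab ba); rewrite ltxx.
move: Hb; rewrite (negPf na') eb' (negPf nab) subr0 => /eqP.
by rewrite oppr_eq0 (negPf n1).
Qed.

Definition Qm (m : nat) (h : fnT) :=
  incid h /\ forall a b : X, a != b -> (ilen a b < m)%N -> h (a, b) = 0.

Lemma Fk_Qm m f : Fk m f -> Qm m f.
Proof. by case=> I H; split=> // a b _; apply: H. Qed.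

Lemma fm_LB m h h' (a b : X) : (0 < m)%N -> Qm m h -> Qm m h' -> ilen a b = m ->
  fm h h' (a, b) = h (a, a) * h' (a, b) + h (a, b) * h' (b, b).
Proof.
move=> m0 [I1 H1] [I2 H2] lab.
have nab : a != b by apply: contraTneq m0 => eab; rewrite -lab eab ilen_xx.
rewrite ffunE /= (bigD1 a) //= (bigD1 b) //=; last by rewrite eq_sym.
rewrite big1 ?addr0 // => t /andP[tb ta].
have [ft|ft] := eqVneq (h (a, t)) 0; first by rewrite ft mul0r.
have [gt|gt] := eqVneq (h' (t, b)) 0; first by rewrite gt mulr0.
have xt := incid_le I1 ft; have tw := incid_le I2 gt.
have a1 : (m <= ilen a t)%N.
  by rewrite leqNgt; apply: contra ft => lt; rewrite H1 // eq_sym.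
have b1 : (m <= ilen t b)%N by rewrite leqNgt; apply: contra gt => lt; rewrite H2.
have := leq_trans (leq_add a1 b1) (ilen_add xt tw).
by rewrite lab; lia.
Qed.

Lemma lie_diag (h v : fnT) (a b : X) : incid h -> incid v ->
  (forall x y : X, x != y -> h (x, y) = 0) ->
  ilie h v (a, b) = lam (a, b) h * v (a, b).
Proof.
move=> Ih Iv Hd; rewrite ilie_fm // !ffunE /=.
rewrite (bigD1 a) //= [X in _ - X](bigD1 b) //= !big1 ?addr0.
- by rewrite /lam /= mulrBl [v _ * _]mulrC.
- by move=> t tb; rewrite Hd ?mulr0 // eq_sym.
- by move=> t ta; rewrite Hd ?mul0r // eq_sym.
Qed.

Lemma LA_ext (psi chi : fnT -> fnT) : lie_automorphism psi ->
  (forall f, incid f -> chi f = psi f) -> lie_automorphism chi.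
Proof.
case=> Hi Hl Hinj Hs Hb E; split.
- by move=> f If; rewrite E //; apply: Hi.
- move=> a f g If Ig; rewrite !E ?Hl //.
  by apply: incidD => //; apply: incid_sc.
- by move=> f g If Ig; rewrite !E //; apply: Hinj.
- by move=> g /Hs [f If <-]; exists f; rewrite ?E.
- by move=> f g If Ig; rewrite !E ?Hb //; apply: incid_ilie.
Qed.

Lemma LA_comp (T psi : fnT -> fnT) : lie_automorphism T -> lie_automorphism psi ->
  lie_automorphism (fun f => T (psi f)).
Proof.
case=> Ti Tl Tinj Ts Tb [Hi Hl Hinj Hs Hb]; split.
- by move=> f If; apply: Ti; apply: Hi.
- by move=> a f g If Ig; rewrite Hl // Tl //; apply: Hi.
- by move=> f g If Ig E; apply: Hinj => //; apply: Tinj => //; apply: Hi.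
- move=> g /Ts [f If <-]; have [h Ih <-] := Hs f If; by exists h.
- by move=> f g If Ig; rewrite Hb // Tb //; apply: Hi.
Qed.

Definition cj (u v : IA) (f : fnT) : fnT := u * (f : IA) * v.

Lemma IA_scl a (f g : IA) : (sc a f : IA) * g = sc a (f * g).
Proof. exact: fm_scl. Qed.
Lemma IA_scr a (f g : IA) : f * (sc a g : IA) = sc a (f * g).
Proof. exact: fm_scr. Qed.

Lemma LA_cj (u v : IA) : incid u -> incid v -> u * v = 1 -> v * u = 1 ->
  lie_automorphism (cj u v).
Proof.
move=> Iu Iv uv vu.
have Icj f : incid f -> incid (cj u v f).
  by move=> If; rewrite /cj !mulIA; apply: incid_fm => //; apply: incid_fm.
split.
- exact: Icj.
- move=> a f g If Ig; rewrite /cj mulrDr mulrDl.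
  by rewrite IA_scr IA_scl.
- move=> f g If Ig E.
  have : v * (cj u v f : IA) * u = v * (cj u v g : IA) * u by rewrite E.
  by rewrite /cj !mulrA vu !mul1r -!mulrA vu !mulr1.
- move=> g Ig; exists (v * (g : IA) * u); first by rewrite !mulIA; apply: incid_fm => //; apply: incid_fm.
  by rewrite /cj !mulrA uv mul1r -!mulrA uv !mulr1.
- move=> f g If Ig; rewrite !ilie_fm ?Icj // -!mulIA /cj.
  rewrite mulrBr mulrBl; congr (_ - _).
    by rewrite !mulrA -[u * f * v * u]mulrA vu mulr1.
  by rewrite !mulrA -[u * g * v * u]mulrA vu mulr1.
Qed.

Lemma teleL (R : pzRingType) (y : R) N : (1 - y) * \sum_(n < N) y ^+ n = 1 - y ^+ N.
Proof.
elim: N => [|N IH]; first by rewrite big_ord0 mulr0 expr0 subrr.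
by rewrite big_ord_recr /= mulrDr IH mulrBl mul1r -exprS addrA subrK.
Qed.

Lemma teleR (R : pzRingType) (y : R) N : (\sum_(n < N) y ^+ n) * (1 - y) = 1 - y ^+ N.
Proof.
elim: N => [|N IH]; first by rewrite big_ord0 mul0r expr0 subrr.
by rewrite big_ord_recr /= mulrDl IH mulrBr mulr1 -exprSr addrA subrK.
Qed.

Lemma FkX m (y : IA) n : Fk m y -> Fk (n * m)%N (y ^+ n).
Proof.
move=> Fy; elim: n => [|n IH]; first by rewrite expr0; apply/Fk0; exact: incid_delta.
by rewrite exprS mulIA mulSn; apply: Fk_fm.
Qed.

Section Main.
Variable phi : fnT -> fnT.
Hypothesis LAphi : lie_automorphism phi.

Let phiI : forall f, incid f -> incid (phi f). Proof. by case: LAphi. Qed.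
Let phiL : linI phi. Proof. by case: LAphi. Qed.
Let phiB : forall f g, incid f -> incid g -> phi (ilie f g) = ilie (phi f) (phi g).
Proof. by case: LAphi. Qed.

Lemma Fphi k f : Fk k f -> Fk k (phi f).
Proof. exact: (Fpres phiI phiL phiB). Qed.

Definition Good m (psi : fnT -> fnT) :=
  [/\ lie_automorphism psi,
      (forall i f, Fk i f -> Fk i.+1 (psi f - phi f))
    & (forall z a b : X, a != b -> (ilen a b < m)%N -> psi (eb z z) (a, b) = 0)].

Lemma Good_F m psi : Good m psi -> forall i f, Fk i f -> Fk i (psi f).
Proof.
case=> _ HG _ i f Ff.
have -> : psi f = phi f + (psi f - phi f) by rewrite addrC subrK.
by apply: FkD; [apply: Fphi | apply: Fk_mono (HG _ _ Ff)].
Qed.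

Lemma Good1 : Good 1 phi.
Proof.
split=> //.
  by move=> i f Ff; rewrite subrr; apply: Fk_0.
move=> z a b nab; rewrite ltnS leqn0 => /eqP l0.
apply: (incidP _ (phiI (incid_ebas (lexx z)))); apply/negP => ab.
have : (a < b)%O by rewrite lt_neqAle nab ab.
by rewrite -ilen_gt0 l0.
Qed.

Lemma Good_step m psi : (0 < m)%N -> Good m psi -> exists psi', Good m.+1 psi'.
Proof.
move=> m0 [LA HG HQ].
have GF := Good_F (And3 LA HG HQ).
case: (LA) => Hi Hl Hinj Hs Hb.
pose h z := psi (eb z z).
have Ih z : incid (h z) by apply: Hi; apply: incid_ebas.
have Qh z : Qm m (h z) by split; [apply: Ih | apply: HQ].
have HF1 f : Fk 1 f -> Fk 1 (psi f) by apply: GF.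
have nz (q : X * X) : ilen q.1 q.2 = m -> exists z, lam q (h z) != 0.
  case: q => a b /= lab.
  have ab : (a < b)%O by rewrite -ilen_gt0 lab.
  have [g Ig eg] := Hs _ (incid_ebas (lexx a)).
  have := lamDecomp (a, b) Hl HF1 Ig; rewrite eg lam_ebas /= eqxx.
  rewrite eq_sym (lt_eqF ab) subr0.
  case: (pickP (fun z => lam (a, b) (h z) != 0)) => [z nz _|none]; first by exists z.
  rewrite big1 => [/eqP|z _]; first by rewrite oner_eq0.
  by move: (none z) => /negbFE/eqP ->; rewrite mulr0.
have coc z z' (q : X * X) : ilen q.1 q.2 = m ->
    lam q (h z) * h z' q = lam q (h z') * h z q.
  case: q => a b /= lab.
  have E : ilie (h z) (h z') = 0.
    rewrite /h -Hb ?incid_ebas ?lexx // ilie_ebas ?lexx //.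
    case: (eqVneq z z') => [<-|nzz]; first by rewrite ?eqxx subrr (lin0 Hl).
    by rewrite subrr (lin0 Hl).
  have := congr1 (fun f : fnT => f (a, b)) E; rewrite ilie_fm ?Ih // subE zeroE.
  rewrite (fm_LB m0 (Qh z) (Qh z') lab) (fm_LB m0 (Qh z') (Qh z) lab) /lam /=.
  move=> /eqP; rewrite subr_eq0 => /eqP E2.
  set A1 := h z; set A2 := h z'.
  have T : ((A1 (a,a) - A1 (b,b)) * A2 (a,b)) - ((A2 (a,a) - A2 (b,b)) * A1 (a,b)) =
    (A1 (a,a) * A2 (a,b) + A1 (a,b) * A2 (b,b)) - (A2 (a,a) * A1 (a,b) + A2 (a,b) * A1 (b,b)).
    by ring.
  by apply/eqP; rewrite -subr_eq0 T E2 subrr.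
(* the correcting element sigma *)
pose sg : fnT := [ffun q : X * X => if ilen q.1 q.2 == m then
   (if [pick z | lam q (h z) != 0] is Some z then h z q / lam q (h z) else 0) else 0].
have Fsg : Fk m sg.
  split.
    apply/incidP => x y nxy; rewrite ffunE /= ilen_nle //.
    by case: eqP => // m00; rewrite -m00 in m0.
  by move=> x y lt; rewrite ffunE /= (ltn_eqF lt).
have ssg z (q : X * X) : ilen q.1 q.2 = m -> h z q = lam q (h z) * sg q.
  move=> lq; rewrite ffunE lq eqxx.
  case: pickP => [z0 nz0|none]; last first.
    by have [z1 nz1] := nz q lq; move: (none z1); rewrite nz1.
  have E := coc z0 z q lq.
  by rewrite mulrA -E mulrC mulrA mulVf // mul1r.
pose y : IA := - (sg : IA).
have Fy : Fk m y by apply: FkN.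
pose N := #|X|.
pose w : IA := \sum_(n < N) y ^+ n.+1.
pose v : IA := 1 + w.
pose u : IA := 1 - y.
have yN : y ^+ N.+1 = 0.
  apply: Fk_big; apply: Fk_mono (FkX N.+1 Fy).
  by rewrite (leq_trans (leqnSn N)) // leq_pmulr.
have ev : v = \sum_(n < N.+1) y ^+ n.
  by rewrite big_ord_recl expr0 /v /w.
have uv : u * v = 1 by rewrite ev teleL yN subr0.
have vu : v * u = 1 by rewrite ev teleR yN subr0.
have I1 : incid (1 : IA) by exact: incid_delta.
have Iu : incid u by apply: incidB => //; apply: Fk_incid Fy.
have Fw : Fk m w.
  apply: Fk_sum => n _; apply: Fk_mono (FkX n.+1 Fy).
  by rewrite leq_pmull.
have Iv : incid v by apply: incidD => //; apply: Fk_incid Fw.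
pose T := cj u v.
have LAT := LA_cj Iu Iv uv vu.
have Tdiff f : incid f -> (T f : IA) - (f : IA) = ((sg : IA) * f - (f : IA) * sg) * v.
  move=> If; rewrite /T /cj.
  have ef : (f : IA) = (f : IA) * u * v by rewrite -mulrA uv mulr1.
  rewrite {2}ef -mulrBl; congr (_ * _).
  rewrite /u /y opprK mulrDl mulrDr mul1r mulr1.
  by rewrite opprD addrACA subrr add0r.
have TF i f : Fk i f -> Fk (m + i)%N (T f - f).
  move=> Ff; rewrite Tdiff; last exact: Fk_incid Ff.
  rewrite -(addn0 (m + i)%N) mulIA; apply: Fk_fm; last by apply/Fk0.
  apply: FkB; rewrite mulIA; first exact: Fk_fm.
  by rewrite addnC; apply: Fk_fm.
have Tq z (q : X * X) : ilen q.1 q.2 = m -> (T (h z) - h z) q = - (lam q (h z) * sg q).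
  case: q => a b /= lab.
  have Fc : Fk m ((sg : IA) * h z - (h z : IA) * sg).
    rewrite -(addn0 m); apply: FkB; rewrite mulIA; first by apply: Fk_fm => //; apply/Fk0.
    by rewrite addnC; apply: Fk_fm => //; apply/Fk0.
  rewrite Tdiff // /v mulrDr mulr1 addE.
  have [_ Z] := Fk_fm Fc Fw; rewrite Z ?addr0; last by rewrite lab -{1}(addn0 m) ltn_add2l.
  rewrite subE !mulIA (fm_LB m0 (Fk_Qm Fsg) (Qh z) lab) (fm_LB m0 (Qh z) (Fk_Qm Fsg) lab).
  rewrite !(Fk_diag0 _ m0 Fsg) /lam /=.
  by ring.
pose psi' := fun f => T (psi f).
exists psi'; split.
- exact: LA_comp.
- move=> i f Ff.
  have -> : psi' f - phi f = (T (psi f) - psi f) + (psi f - phi f) by rewrite addrA subrK.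
  apply: FkD; last exact: HG.
  by apply: Fk_mono (TF _ _ (GF _ _ Ff)); lia.
- move=> z a b nab; rewrite ltnS leq_eqVlt => /orP [/eqP lab | lab].
    have -> : psi' (eb z z) (a, b) = h z (a, b) + (T (h z) - h z) (a, b).
      by rewrite -addE addrC subrK.
    by rewrite Tq // (ssg z (a, b)) // subrr.
  have [_ Z] := TF 0 (h z) (proj2 (Fk0 _) (Ih z)).
  have -> : psi' (eb z z) (a, b) = h z (a, b) + (T (h z) - h z) (a, b).
    by rewrite -addE addrC subrK.
  by rewrite Z ?addn0 // HQ // addr0.
Qed.

Lemma Good_all m : exists psi, Good m.+1 psi.
Proof.
elim: m => [|m [psi G]]; first by exists phi; exact: Good1.
exact: Good_step G.
Qed.

Lemma ilie_diag_ebas (z x y : X) : (x <= y)%O -> x != y ->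
  ilie (eb z z) (eb x y) = sc ((z == x)%:R - (z == y)%:R) (eb x y).
Proof.
move=> xy nxy; rewrite ilie_ebas ?lexx //.
case: (eqVneq z x) => [ezx|nzx].
  subst z; rewrite eq_sym (negPf nxy) /=.
  by apply/ffunP => p; rewrite !ffunE /= ?mulr0n ?mulr1n; ring.
case: (eqVneq z y) => [ezy|nzy].
  by subst z; apply/ffunP => p; rewrite !ffunE /= ?mulr0n ?mulr1n; ring.
by apply/ffunP => p; rewrite !ffunE /= ?mulr0n ?mulr1n; ring.
Qed.

Lemma key psi (x y : X) : Good #|X|.+1 psi -> (x <= y)%O ->
  Lcomp (ilen x y) (phi (eb x y)) = psi (eb x y).
Proof.
move=> G xy; have GF := Good_F G; case: G => LA HG HQ.
case: (LA) => Hi Hl Hinj Hs Hb.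
have HF1 f : Fk 1 f -> Fk 1 (psi f) by apply: GF.
set i := ilen x y; set e := eb x y.
have Fe : Fk i e := Fk_ebas xy.
have Ie : incid e := incid_ebas xy.
have [_ Hd] := HG i e Fe.
apply/ffunP => q; rewrite ffunE; case: eqP => [qi|qi].
  have := Hd q.1 q.2; rewrite -surjective_pairing subE qi ltnSn => /(_ isT) /eqP.
  by rewrite subr_eq0 => /eqP.
case: (eqVneq x y) => [exy|nxy].
  have i0 : i = 0 by rewrite /i exy ilen_xx.
  rewrite /e -exy; case: q qi => a b /= qi.
  rewrite HQ //; last by rewrite ltnS ltnW // ilen_lt.
  by apply/eqP => eab; apply: qi; rewrite eab ilen_xx i0.
have lxy : (x < y)%O by rewrite lt_neqAle nxy xy.
have i1 : (0 < i)%N by rewrite /i ilen_gt0.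
have Fv : Fk i (psi e) by apply: GF.
pose c z : K := (z == x)%:R - (z == y)%:R.
pose h z := psi (eb z z).
have Ih z : incid (h z) by apply: Hi; apply: incid_ebas.
have hd z : forall a b : X, a != b -> h z (a, b) = 0.
  by move=> a b nab; apply: HQ => //; rewrite ltnS ltnW // ilen_lt.
have wq (q' : X * X) : psi e q' != 0 -> forall z, lam q' (h z) = c z.
  move=> nz z.
  have E : ilie (h z) (psi e) = sc (c z) (psi e).
    by rewrite /h -Hb ?incid_ebas // ilie_diag_ebas // (linZ Hl).
  have := congr1 (fun f : fnT => f q') E; rewrite scE.
  case: q' nz => a b nz; rewrite (lie_diag _ _ (Ih z) (Hi _ Ie) (hd z)).
  by move/(mulIf nz).
have strict (q' : X * X) : psi e q' != 0 -> (q'.1 < q'.2)%O.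
  move=> nz; rewrite -ilen_gt0 (leq_trans i1) //.
  case: Fv => _ Z; rewrite leqNgt; apply: contra nz => lt.
  by rewrite [q']surjective_pairing (Z _ _ lt).
have uniq (q' q'' : X * X) : psi e q' != 0 -> psi e q'' != 0 -> q' = q''.
  move=> n1 n2; apply: weight_unique; [exact: strict | exact: strict |].
  move=> a; have [g Ig <-] := Hs _ (incid_ebas (lexx a)).
  rewrite !(lamDecomp _ Hl HF1 Ig); apply: eq_bigr => z _.
  by rewrite (wq _ n1) (wq _ n2).
apply/eqP; rewrite eq_sym; apply/negPn/negP => nz.
set cv := psi e q.
have ev : psi e = sc cv (eb q.1 q.2).
  apply/ffunP => q'; rewrite !ffunE.
  case: (eqVneq (psi e q') 0) => [z0|n'].
    case: eqP => [eq'|]; last by rewrite mulr0 z0.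
    by move: nz; rewrite /cv (surjective_pairing q) -eq' z0 eqxx.
  have eqq := uniq _ _ n' nz; rewrite -surjective_pairing eqq eqxx mulr1.
  by [].
have cv0 : cv != 0 by [].
have E : psi (sc cv^-1 e) = eb q.1 q.2.
  by rewrite (linZ Hl) // ev scA mulVf // sc1.
have Fq : Fk (ilen q.1 q.2) (sc cv^-1 e).
  apply: (Frev LA); first exact: incid_sc.
  rewrite E; apply: Fk_ebas; apply: ltW; exact: strict.
have gt : (i < ilen q.1 q.2)%N.
  rewrite ltn_neqAle eq_sym; apply/andP; split; first by apply/eqP.
  case: Fv => _ Z; rewrite leqNgt; apply: contra nz => lt.
  by rewrite /cv [q]surjective_pairing (Z _ _ lt).
case: Fq => _ Z; have := Z x y gt; rewrite !ffunE eqxx mulr1 => /eqP.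
by rewrite invr_eq0 (negPf cv0).
Qed.

Lemma tilde_eq psi : Good #|X|.+1 psi -> forall f, incid f -> tilde phi f = psi f.
Proof.
move=> G f If; have [LA _ _] := G; case: (LA) => Hi Hl _ _ _.
rewrite [in RHS](decompI If) (lin_sum Hl); last first.
  by move=> p pl; apply: incid_sc; apply: incid_ebas.
rewrite /tilde; apply: eq_bigr => p pl.
by rewrite (linZ Hl) ?incid_ebas // (key G pl).
Qed.

Lemma tilde_LA : lie_automorphism (tilde phi).
Proof.
have [psi G] := Good_all #|X|.
have [LA _ _] := G.
exact: LA_ext LA (tilde_eq G).
Qed.

End Main.

End Dev.

Theorem proposition4p5 (K : fieldType) (d : Order.disp_t) (X : finPOrderType d)
  (phi : {ffun X * X -> K} -> {ffun X * X -> K}) :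
  poset_connected X ->
  lie_automorphism phi ->
  lie_automorphism (tilde phi).
Proof.
by move=> _ LA; apply: tilde_LA.
Qed.
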